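(* Let $L>0$, $d\ge1$, and let $X=\{x^{(1)},\dots,x^{(n)}\}\subset\mathbb{R}^d$ with $\|x^{(i)}\|_\infty\le L$ for all $i$. Let $w\in\mathbb{R}^n$ with $\left(\sum_{i=1}^n|w_i|\right)^2\le\xi$, and let $\alpha>0$. Then for every positive integer $s$, \[ w^T\left(K_X-K^{\mathsf{GS}}_{X,s}\right)w\le\left(\sum_{i=1}^n|w_i|\right)^2 d\,\exp(2dL^2)\left(\frac{2eL^2}{s}\right)^s, \] and moreover this quantity is at most $\alpha$ when $s=\Theta\!\left(\frac{\log\frac{\xi\, d\exp(2dL^2)}{\alpha}}{\log\left(\frac{1}{2eL^2}\log\frac{\xi\, d\exp(2dL^2)}{\alpha}\right)}\right)$ (with a sufficiently large constant).
   Context: $K_X$ is the $n\times n$ matrix with $(K_X)_{i,j}=\exp(-\|x^{(i)}-x^{(j)}\|^2)$ (Euclidean norm). For a positive integer $s$, $K^{\mathsf{GS}}_{X,s}$ is the $n\times n$ matrix with \[ (K^{\mathsf{GS}}_{X,s})_{i,j}=\sum_{j_1=0}^{s-1}\cdots\sum_{j_d=0}^{s-1}\left(e^{-\|x^{(i)}\|^2}\prod_{a=1}^{d}\sqrt{\tfrac{2^{j_a}}{j_a!}}(x^{(i)}_a)^{j_a}\right)\left(e^{-\|x^{(j)}\|^2}\prod_{a=1}^{d}\sqrt{\tfrac{2^{j_a}}{j_a!}}(x^{(j)}_a)^{j_a}\right). \] *)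

(* Defs.v *)
From HB Require Import structures.
From mathcomp Require Import all_boot all_order all_algebra.
From mathcomp Require Import all_classical all_reals all_analysis.
Set Implicit Arguments. Unset Strict Implicit. Unset Printing Implicit Defensive.
Import Order.TTheory GRing.Theory Num.Theory.
Local Open Scope ring_scope.

(* The points x^(1..n) in R^d are the rows of X : 'M_(n,d): X i a = x^(i)_a. *)

Definition sqdist (R : realType) (n d : nat) (X : 'M[R]_(n, d)) (i j : 'I_n) : R :=
  \sum_(a < d) (X i a - X j a) ^+ 2.

Definition sqnorm (R : realType) (n d : nat) (X : 'M[R]_(n, d)) (i : 'I_n) : R :=
  \sum_(a < d) (X i a) ^+ 2.

Definition KX (R : realType) (n d : nat) (X : 'M[R]_(n, d)) : 'M[R]_n :=
  \matrix_(i < n, j < n) expR (- sqdist X i j).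

Definition gsfeat (R : realType) (n d s : nat) (X : 'M[R]_(n, d)) (i : 'I_n)
    (jj : {ffun 'I_d -> 'I_s}) : R :=
  expR (- sqnorm X i) *
  \prod_(a < d) (Num.sqrt (2 ^+ (jj a) / ((jj a)`!)%:R) * (X i a) ^+ (jj a)).

Definition KGS (R : realType) (n d : nat) (X : 'M[R]_(n, d)) (s : nat) : 'M[R]_n :=
  \matrix_(i < n, j < n) \sum_(jj : {ffun 'I_d -> 'I_s}) gsfeat X i jj * gsfeat X j jj.

Definition qform (R : realType) (n : nat) (A : 'M[R]_n) (w : 'cV[R]_n) : R :=
  (w^T *m A *m w) 0 0.

Definition l1 (R : realType) (n : nat) (w : 'cV[R]_n) : R := \sum_(i < n) `|w i 0|.

Definition gs_bound (R : realType) (n d : nat) (w : 'cV[R]_n) (L : R) (s : nat) : R :=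
  l1 w ^+ 2 * d%:R * expR (2 * d%:R * L ^+ 2) * (2 * expR 1 * L ^+ 2 / s%:R) ^+ s.

(* Main.v *)
Require Import Defs.
From HB Require Import structures.
From mathcomp Require Import all_boot all_order all_algebra.
From mathcomp Require Import all_classical all_reals all_analysis.
From mathcomp Require Import ring lra.
Import Order.TTheory GRing.Theory Num.Theory.
Import numFieldNormedType.Exports.
Local Open Scope ring_scope.
Local Open Scope classical_set_scope.

Section Aux.
Variable R : realType.
Implicit Types x z : R.

Lemma psum_le_expR x n : 0 <= x -> \sum_(k < n) x ^+ k / k`!%:R <= expR x.
Proof.
move=> x0.
have H : {homo series (exp_coeff x) : n m / (n <= m)%N >-> n <= m}.
  move=> a b ab; rewrite /series /=.
  have := @nondecreasing_series R (exp_coeff x) predT 0 _ a b ab.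
  by apply => k _ _; apply: exp_coeff_ge0.
have := nondecreasing_cvgn_le H (is_cvg_series_exp_coeff x) n.
by rewrite /series /= big_mkord.
Qed.

Lemma exp_tail z s : `|expR z - \sum_(k < s) z ^+ k / k`!%:R| <= expR `|z| * (`|z| ^+ s / s`!%:R).
Proof.
set T := \sum_(k < s) _.
have Hc : series (exp_coeff z) n @[n --> \oo] --> expR z.
  exact: is_cvg_series_exp_coeff.
have Hv : `|series (exp_coeff z) N - T| @[N --> \oo] --> `|expR z - T|.
  apply: cvg_norm; apply: cvgB => //; exact: cvg_cst.
rewrite -(cvg_lim _ Hv) //. apply: limr_le; first exact: cvgP Hv.
near=> N.
have sN : (s <= N)%N by near: N; exists s.
rewrite /series /= /T.
rewrite -(big_mkord xpredT (fun k => z ^+ k / k`!%:R)) (big_cat_nat (leq0n s) sN) /= addrAC subrr add0r.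
apply: le_trans (ler_norm_sum _ _ _) _.
rewrite -{1}(add0n s) big_addn.
apply: (@le_trans _ _ (\sum_(0 <= i < N - s) `|z| ^+ s / s`!%:R * (`|z| ^+ i / i`!%:R))).
  apply: ler_sum => i _.
  rewrite /exp_coeff /= normrM normfV normrX [`|_%:R|]ger0_norm ?ler0n //.
  rewrite mulrACA -exprD addnC -invfM ler_wpM2l ?exprn_ge0 //.
  rewrite lef_pV2 ?posrE ?mulr_gt0 ?ltr0n ?fact_gt0 // -natrM ler_nat.
  have := bin_fact (leq_addl i s); rewrite addnK addnC => <-.
  by apply: leq_pmull; rewrite bin_gt0 leq_addr.
rewrite -mulr_sumr mulrC ler_wpM2r ?divr_ge0 ?exprn_ge0 //.
by rewrite big_mkord; apply: psum_le_expR.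
Unshelve. all: by end_near.
Qed.

Lemma norm_prod_le d (T : 'I_d -> R) (M : R) : (forall a, `|T a| <= M) -> `|\prod_a T a| <= M ^+ d.
Proof.
move=> HT; rewrite normr_prod.
have -> : M ^+ d = \prod_(a < d) M by rewrite prodr_const card_ord.
by apply: ler_prod => a _; rewrite normr_ge0 HT.
Qed.

Lemma prod_diff d (E T : 'I_d -> R) (M del : R) : 0 <= M -> 0 <= del ->
  (forall a, `|E a| <= M) -> (forall a, `|T a| <= M) ->
  (forall a, `|E a - T a| <= M * del) ->
  `|\prod_a E a - \prod_a T a| <= d%:R * M ^+ d * del.
Proof.
move=> M0 d0; elim: d E T => [|d IH] E T HE HT HET.
  by rewrite !big_ord0 subrr normr0 mul0r mul0r.
rewrite !big_ord_recr /=.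
set PE := \prod_(i < d) _; set PT := \prod_(i < d) _.
set e := E _; set t := T _.
have -> : PE * e - PT * t = (PE - PT) * e + PT * (e - t) by ring.
apply: (le_trans (ler_normD _ _)); rewrite !normrM.
have h1 : `|PE - PT| * `|e| <= (d%:R * M ^+ d * del) * M.
  apply: ler_pM; rewrite ?normr_ge0 //; last exact: HE.
  by apply: IH => a; [exact: HE | exact: HT | exact: HET].
have h2 : `|PT| * `|e - t| <= M ^+ d * (M * del).
  apply: ler_pM; rewrite ?normr_ge0 //; last exact: HET.
  by rewrite /PT; apply: norm_prod_le => a; exact: HT.
apply: le_trans (lerD h1 h2) _.
rewrite -natr1 exprS le_eqVlt; apply/orP; left; apply/eqP; ring.
Qed.


Lemma KGS_entry n d (X : 'M[R]_(n, d)) s i j :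
  KGS X s i j = expR (- sqnorm X i) * expR (- sqnorm X j) *
    \prod_(a < d) \sum_(k < s) (2 * X i a * X j a) ^+ k / k`!%:R.
Proof.
rewrite mxE.
have key : forall a k, (Num.sqrt (2 ^+ k / k`!%:R) * (X i a) ^+ k) *
    (Num.sqrt (2 ^+ k / k`!%:R) * (X j a) ^+ k) = (2 * X i a * X j a) ^+ k / k`!%:R.
  move=> a k; rewrite mulrACA -expr2 sqr_sqrtr ?divr_ge0 ?exprn_ge0 ?ler0n //.
  rewrite !exprMn; ring.
under eq_bigr => jj _ do rewrite /gsfeat mulrACA -big_split /=.
under eq_bigr => jj _ do under eq_bigr => a _ do rewrite key.
rewrite -mulr_sumr; congr (_ * _).
by rewrite bigA_distr_bigA.
Qed.

Lemma KX_entry n d (X : 'M[R]_(n, d)) i j :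
  KX X i j = expR (- sqnorm X i) * expR (- sqnorm X j) *
    \prod_(a < d) expR (2 * X i a * X j a).
Proof.
rewrite mxE -expR_sum -!expRD; congr expR.
rewrite /sqdist /sqnorm -!sumrN -!big_split; apply: eq_bigr => a _ /=; ring.
Qed.

Lemma entry_bound (L : R) n d (X : 'M[R]_(n, d)) s i j : 0 <= L ->
  (forall i a, `|X i a| <= L) ->
  `|(KX X - KGS X s) i j| <=
    d%:R * expR (2 * L ^+ 2) ^+ d * ((2 * L ^+ 2) ^+ s / s`!%:R).
Proof.
move=> L0 HX.
set c := 2 * L ^+ 2.
have c0 : 0 <= c by rewrite /c mulr_ge0 ?exprn_ge0.
have hz : forall a, `|2 * X i a * X j a| <= c.
  move=> a; rewrite !normrM ger0_norm // /c -mulrA ler_wpM2l // expr2.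
  by apply: ler_pM; rewrite ?normr_ge0 ?HX.
have -> : (KX X - KGS X s) i j = KX X i j - KGS X s i j by rewrite !mxE.
rewrite KX_entry KGS_entry -mulrBr normrM.
set ee := expR _ * expR _.
have ee0 : 0 <= ee by rewrite /ee mulr_ge0 ?expR_ge0.
have ee1 : ee <= 1.
  rewrite /ee -expRD expR_le1 -opprD oppr_le0.
  by rewrite addr_ge0 // /sqnorm sumr_ge0 // => a _; rewrite sqr_ge0.
rewrite ger0_norm //.
apply: (le_trans (ler_piMl (normr_ge0 _) ee1)).
apply: prod_diff; rewrite ?expR_ge0 ?divr_ge0 ?exprn_ge0 //.
- move=> a; rewrite ger0_norm ?expR_ge0 // ler_expR.
  exact: le_trans (ler_norm _) (hz a).
- move=> a; apply: le_trans (ler_norm_sum _ _ _) _.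
  apply: le_trans (_ : _ <= expR `|2 * X i a * X j a|) _; last by rewrite ler_expR.
  under eq_bigr => k _ do rewrite normrM normfV normrX [`|_%:R|]ger0_norm ?ler0n //.
  by apply: psum_le_expR.
- move=> a; apply: le_trans (exp_tail _ _) _.
  apply: ler_pM; rewrite ?expR_ge0 ?divr_ge0 ?exprn_ge0 ?normr_ge0 ?ler0n //.
    by rewrite ler_expR.
  by rewrite ler_wpM2r ?invr_ge0 ?ler0n // lerXn2r ?nnegrE ?normr_ge0.
Qed.

Lemma qform_bound n (A : 'M[R]_n) (w : 'cV[R]_n) (B : R) :
  (forall i j, `|A i j| <= B) -> qform A w <= B * l1 w ^+ 2.
Proof.
move=> HA.
rewrite /qform mxE.
under eq_bigr => j _ do rewrite mxE mulr_suml.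
apply: le_trans (ler_norm _) _.
apply: le_trans (ler_norm_sum _ _ _) _.
apply: (@le_trans _ _ (\sum_(j < n) \sum_(i < n) B * (`|w i 0| * `|w j 0|))).
  apply: ler_sum => j _; apply: le_trans (ler_norm_sum _ _ _) _.
  apply: ler_sum => i _; rewrite !mxE !normrM mulrC mulrA [B * _]mulrC.
  by rewrite [`|w j 0| * _]mulrC ler_wpM2l ?mulr_ge0 ?normr_ge0.
rewrite expr2 /l1 mulr_suml mulr_sumr exchange_big /= le_eqVlt; apply/orP; left; apply/eqP.
apply: eq_bigr => i _; rewrite mulr_sumr mulr_sumr; apply: eq_bigr => j _.
ring.
Qed.

Lemma fact_bound (c : R) s : 0 <= c -> (0 < s)%N ->
  c ^+ s / s`!%:R <= (expR 1 * c / s%:R) ^+ s.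
Proof.
move=> c0 s0.
have hs : (s%:R : R) ^+ s / s`!%:R <= expR s%:R.
  case: s s0 => // m _.
  have := @expR_ge1Dxn R m.+1%:R m (ler0n _ _).
  by apply: le_trans; rewrite lerDr.
have sp : (s%:R : R) ^+ s != 0.
  by rewrite expf_neq0 // pnatr_eq0; case: (s) s0.
have fp : (s`!%:R : R) != 0 by rewrite pnatr_eq0; have := fact_gt0 s; case: (s`!).
rewrite expr_div_n exprMn -expRM_natl mulr1.
have -> : c ^+ s / s`!%:R = (c ^+ s / s%:R ^+ s) * (s%:R ^+ s / s`!%:R) by rewrite mulrA divfK.
have -> : expR s%:R * c ^+ s / s%:R ^+ s = (c ^+ s / s%:R ^+ s) * expR s%:R by ring.
by rewrite ler_wpM2l // divr_ge0 ?exprn_ge0 ?ler0n.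
Qed.

Lemma ln_le_half (y : R) : 0 < y -> ln y <= y / 2.
Proof.
move=> y0.
have -> : y = 2 * (1 + (y / 2 - 1)) by field.
rewrite lnM ?posrE //; last by rewrite addrC subrK divr_gt0.
have l2 : ln (2:R) <= 1.
  have h : ln 2 <= ln (expR (1:R)).
    rewrite ler_ln ?posrE ?expR_gt0 //.
    by have := expR_ge1Dx (1 : R); lra.
  by rewrite expRK in h.
have := @le_ln1Dx R (y / 2 - 1).
rewrite ltrBrDl subrr divr_gt0 // => /(_ isT) h.
have -> : 2 * (1 + (y / 2 - 1)) / 2 = 1 + (y / 2 - 1) by field.
lra.
Qed.

Lemma key2 (u v : R) : 1 < u -> 2 * u / ln u <= v -> u <= v * ln v.
Proof.
move=> u1 hv.
have lu : 0 < ln u by apply: ln_gt0.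
have u0 : 0 < u by lra.
set v0 := 2 * u / ln u.
have v00 : 0 < v0 by rewrite /v0 divr_gt0 // mulr_gt0.
have lnv0 : ln u / 2 <= ln v0.
  rewrite /v0 ln_div ?posrE ?mulr_gt0 // lnM ?posrE //.
  have := @ln_le_half (ln u) lu.
  have : 0 <= ln (2:R) by rewrite ln_ge0 // ler1n.
  lra.
have lnv : ln v0 <= ln v.
  by rewrite ler_ln ?posrE //; apply: lt_le_trans v00 hv.
have -> : u = v0 * (ln u / 2) by rewrite /v0; field; rewrite gt_eqF.
have hv' : v0 <= v := hv.
clearbody v0.
apply: ler_pM; lra.
Qed.

Lemma part1 (L : R) (n d : nat) (X : 'M[R]_(n, d)) (w : 'cV[R]_n) s :
  0 < L -> (forall i a, `|X i a| <= L) -> (0 < s)%N ->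
  qform (KX X - KGS X s) w <= gs_bound d w L s.
Proof.
move=> L0 HX s0.
apply: le_trans; first by apply: qform_bound => i j; apply: (@entry_bound L n d X s i j (ltW L0) HX).
rewrite /gs_bound.
have -> : expR (2 * d%:R * L ^+ 2) = expR (2 * L ^+ 2) ^+ d.
  by rewrite -expRM_natl; congr expR; ring.
have -> : 2 * expR 1 * L ^+ 2 / s%:R = expR 1 * (2 * L ^+ 2) / s%:R by ring.
have h := @fact_bound (2 * L ^+ 2) s (mulr_ge0 (ler0n _ 2) (exprn_ge0 2 (ltW L0))) s0.
set K := l1 w ^+ 2 * d%:R * expR (2 * L ^+ 2) ^+ d.
have K0 : 0 <= K.
  rewrite /K; apply: mulr_ge0; [apply: mulr_ge0; [exact: sqr_ge0 | exact: ler0n] | apply: exprn_ge0; exact: expR_ge0].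
have -> : d%:R * expR (2 * L ^+ 2) ^+ d * ((2 * L ^+ 2) ^+ s / s`!%:R) * l1 w ^+ 2
   = K * ((2 * L ^+ 2) ^+ s / s`!%:R) by rewrite /K; ring.
by rewrite ler_wpM2l.
Qed.

Lemma part2 (L : R) (n d : nat) (X : 'M[R]_(n, d)) (w : 'cV[R]_n) (xi alpha : R) :
  0 < L -> (0 < d)%N -> l1 w ^+ 2 <= xi -> 0 < alpha ->
  let T := ln (xi * d%:R * expR (2 * d%:R * L ^+ 2) / alpha) in
  2 * expR 1 * L ^+ 2 < T ->
  forall s : nat, (0 < s)%N ->
  2 * T / ln (T / (2 * expR 1 * L ^+ 2)) <= s%:R ->
  gs_bound d w L s <= alpha.
Proof.
move=> L0 d0 hxi a0 T hT s s0 hs.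
set c := 2 * expR 1 * L ^+ 2 in hT hs *.
have c0 : 0 < c by rewrite /c !mulr_gt0 ?expR_gt0 ?exprn_gt0.
pose A := xi * d%:R * expR (2 * d%:R * L ^+ 2) / alpha.
have hT' : c < ln A := hT.
have A0 : 0 < A.
  rewrite ltNge; apply/negP => hA.
  have := ln_le0 (le_trans hA ler01); lra.
have eA : expR (ln A) = A by apply: lnK; rewrite posrE.
set u := T / c.
have u1 : 1 < u by rewrite /u ltr_pdivlMr // mul1r.
set v := s%:R / c.
have s0' : (0 : R) < s%:R by rewrite ltr0n.
have v0 : 0 < v by rewrite /v divr_gt0.
have hv : 2 * u / ln u <= v.
  have -> : 2 * u / ln u = (2 * T / ln u) / c by rewrite /u; ring.
  by rewrite /v ler_wpM2r // invr_ge0 ltW.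
have kv := @key2 u v u1 hv.
have Ts : T <= s%:R * ln v.
  have -> : T = c * u by rewrite /u mulrC divfK // gt_eqF.
  have -> : s%:R = c * v by rewrite /v mulrC divfK // gt_eqF.
  by rewrite -mulrA ler_wpM2l ?(ltW c0).
rewrite /gs_bound -/c.
apply: (@le_trans _ _ (xi * d%:R * expR (2 * d%:R * L ^+ 2) * (c / s%:R) ^+ s)).
  have cs0 : 0 <= (c / s%:R) ^+ s by rewrite exprn_ge0 // divr_ge0 ?(ltW c0) ?(ltW s0').
  rewrite ler_wpM2r // ler_wpM2r ?expR_ge0 // ler_wpM2r ?ler0n //.
have -> : xi * d%:R * expR (2 * d%:R * L ^+ 2) = A * alpha by rewrite /A divfK // gt_eqF.
have -> : c / s%:R = expR (- ln v) by rewrite expRN lnK ?posrE // /v invf_div.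
rewrite -expRM_natl -{1}eA -(mulrC alpha) -mulrA -expRD.
rewrite ger_pMr // expR_le1.
have : T = ln A by [].
lra.
Qed.

End Aux.

Local Close Scope classical_set_scope.

Theorem lemma2p6 (R : realType) :
  (forall (L : R) (n d : nat) (X : 'M[R]_(n, d)) (w : 'cV[R]_n) (xi alpha : R),
     0 < L -> (0 < d)%N ->
     (forall i a, `|X i a| <= L) ->
     l1 w ^+ 2 <= xi -> 0 < alpha ->
     forall s : nat, (0 < s)%N ->
       qform (KX X - KGS X s) w <= gs_bound d w L s)
  /\
  (exists C : R, 0 < C /\
     forall (L : R) (n d : nat) (X : 'M[R]_(n, d)) (w : 'cV[R]_n) (xi alpha : R),
       0 < L -> (0 < d)%N ->
       (forall i a, `|X i a| <= L) ->
       l1 w ^+ 2 <= xi -> 0 < alpha ->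
       let T := ln (xi * d%:R * expR (2 * d%:R * L ^+ 2) / alpha) in
       2 * expR 1 * L ^+ 2 < T ->
       forall s : nat, (0 < s)%N ->
         C * T / ln (T / (2 * expR 1 * L ^+ 2)) <= s%:R ->
         gs_bound d w L s <= alpha).
Proof.
split.
  move=> L n d X w xi alpha L0 d0 HX _ _ s s0.
  exact: part1.
exists 2; split => //.
move=> L n d X w xi alpha L0 d0 HX hxi a0.
exact: part2.
Qed.
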